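(* The Banach lattice $\ell_2$ (with coordinatewise order) contains a basis $(u_i)$ which is isometrically equivalent to the canonical basis $(e_i)$ of $\ell_2$ (i.e. $(u_i)$ is an orthonormal basis) and which is neither bibasic nor uniformly quasi-greedy.
   Context: A sequence $(x_k)$ of nonzero vectors in a Banach lattice is bibasic if there is $M\ge1$ with $\|\bigvee_{n=1}^m|\sum_{k=1}^na_kx_k|\|\le M\|\sum_{k=1}^ma_kx_k\|$ for all $m$ and scalars $a_k$. A semi-normalized basic sequence $(x_k)$ with span $E$ and biorthogonal functionals $x_k^*$ is uniformly quasi-greedy if $\sup_m\sup_{x\in E,\|x\|=1}\|\bigvee_{n=1}^m|\mathcal{G}_n(x)|\|<\infty$, where $\mathcal{G}_n(x)=\sum_{j=1}^n x^*_{\rho(j)}(x)x_{\rho(j)}$ and $\rho$ is the natural greedy ordering of $x$ (indices listed by non-increasing $|x_k^*(x)|$, ties broken by increasing index). *)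

(* Defs.v *)
From Stdlib Require Import Reals List.
From Coquelicot Require Import Coquelicot.
Open Scope R_scope.

(* vectors are real sequences nat -> R; indices start at 0 *)
Definition vec := nat -> R.

Definition in_l2 (x : vec) : Prop := ex_series (fun k => (x k) ^ 2).
Definition l2norm (x : vec) : R := sqrt (Series (fun k => (x k) ^ 2)).
Definition vsub (x y : vec) : vec := fun k => x k - y k.

Definition canon (i : nat) : vec := fun j => if Nat.eqb i j then 1 else 0.

Fixpoint lin_comb (u : nat -> vec) (a : nat -> R) (n : nat) : vec :=
  match n with
  | O => fun _ => 0
  | S n' => fun j => lin_comb u a n' j + a n' * u n' j
  end.

Definition list_comb (u : nat -> vec) (a : nat -> R) (A : list nat) : vec :=
  fun j => fold_right (fun k acc => a k * u k j + acc) 0 A.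

(* coordinatewise lattice supremum  \/_{n=1}^m |f n|  (0 for m = 0) *)
Fixpoint sup_abs (f : nat -> vec) (m : nat) : vec :=
  match m with
  | O => fun _ => 0
  | S m' => fun j => Rmax (sup_abs f m' j) (Rabs (f (S m') j))
  end.

Definition expands (u : nat -> vec) (a : nat -> R) (x : vec) : Prop :=
  is_lim_seq (fun n => l2norm (vsub (lin_comb u a n) x)) 0.

Definition is_basis (u : nat -> vec) : Prop :=
  (forall i, in_l2 (u i)) /\
  forall x, in_l2 x ->
    exists a, expands u a x /\
      forall b, expands u b x -> forall k, b k = a k.

Definition isometric_to_canon (u : nat -> vec) : Prop :=
  forall (a : nat -> R) (n : nat),
    l2norm (lin_comb u a n) = l2norm (lin_comb canon a n).

(* bibasic (with 0-based indexing: partial sums of the first n terms, n = 1..m) *)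
Definition bibasic (u : nat -> vec) : Prop :=
  exists M, 1 <= M /\
    forall (m : nat) (a : nat -> R),
      l2norm (sup_abs (lin_comb u a) m) <= M * l2norm (lin_comb u a m).

(* A is the set of the first n indices in the natural greedy ordering of the
   coefficient sequence a (non-increasing |a_k|, ties broken by increasing index) *)
Definition greedy_set (a : nat -> R) (n : nat) (A : list nat) : Prop :=
  NoDup A /\ length A = n /\
  forall i j, In i A -> ~ In j A ->
    Rabs (a j) < Rabs (a i) \/ (Rabs (a j) = Rabs (a i) /\ (i < j)%nat).

(* uniformly quasi-greedy: x ranges over the (closed) span E of u, with
   coefficients a = (x_k^*(x))_k; G_n(x) = list_comb u a (A n) *)
Definition uniformly_quasi_greedy (u : nat -> vec) : Prop :=
  exists K, forall (m : nat) (x : vec) (a : nat -> R) (A : nat -> list nat),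
    in_l2 x -> expands u a x -> l2norm x = 1 ->
    (forall n, (1 <= n <= m)%nat -> greedy_set a n (A n)) ->
    l2norm (sup_abs (fun n => list_comb u a (A n)) m) <= K.

(* Main.v *)
Require Import Defs.
From Stdlib Require Import Reals List.
From Stdlib Require Import Lra Lia Psatz Arith ZArith.
From Coquelicot Require Import Coquelicot.
Open Scope R_scope.
From mathcomp Require Import ssreflect ssrfun ssrbool eqtype ssrnat seq fintype bigop.
From mathcomp Require Import Rstruct zify.
Open Scope R_scope.

Definition psum (p : nat -> R) (n : nat) : R := \big[Rplus/0]_(0 <= j < n) p j.

Lemma psumS p n : psum p n.+1 = psum p n + p n.
Proof. by rewrite /psum big_nat_recr. Qed.

Lemma psum0 p : psum p 0 = 0.
Proof. by rewrite /psum big_geq. Qed.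

Lemma sum_n_psum p n : sum_n p n = psum p n.+1.
Proof.
elim: n => [|n IH]; first by rewrite sum_O psumS psum0 Rplus_0_l.
by rewrite sum_Sn psumS -IH.
Qed.

Lemma is_series_psum p l : is_series p l <-> is_lim_seq (psum p) l.
Proof.
split => H.
- apply (is_lim_seq_incr_1 (psum p) l).
  apply: (is_lim_seq_ext (sum_n p)); first by move=> n; rewrite sum_n_psum.
  exact H.
- have H1 := proj1 (is_lim_seq_incr_1 (psum p) l) H.
  have H2 : is_lim_seq (sum_n p) l.
    apply: (is_lim_seq_ext (fun n => psum p n.+1)) => //.
    by move=> n; rewrite sum_n_psum.
  exact H2.
Qed.

Lemma psum_ext p q n : (forall j, (j < n)%N -> p j = q j) -> psum p n = psum q n.
Proof.
move=> H; rewrite /psum; apply: eq_big_nat => j /andP [_ Hj]; exact: H.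
Qed.

Lemma psum_stable p L n : (forall j, (L <= j)%N -> p j = 0) -> (L <= n)%N ->
  psum p n = psum p L.
Proof.
move=> H Hn; rewrite /psum (big_cat_nat (leq0n L) Hn) /=.
have -> : \big[Rplus/0]_(L <= i < n) p i = 0.
  rewrite big_nat_cond; apply: big1 => j /andP [/andP [Hj _] _]; exact: H.
by rewrite Rplus_0_r.
Qed.

Lemma series_fin p L : (forall j, (L <= j)%N -> p j = 0) -> is_series p (psum p L).
Proof.
move=> H; apply/is_series_psum.
apply: (is_lim_seq_ext_loc (fun _ => psum p L)); last exact: is_lim_seq_const.
exists L => n Hn; symmetry; apply: psum_stable => //; apply/leP; lia.
Qed.

Lemma psum_ge0 p n : (forall j, 0 <= p j) -> 0 <= psum p n.
Proof.
move=> H; elim: n => [|n IH]; first by rewrite psum0; lra.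
rewrite psumS; have := H n; lra.
Qed.

Lemma psum_mono p m n : (forall j, 0 <= p j) -> (m <= n)%N -> psum p m <= psum p n.
Proof.
move=> H; elim: n => [|n IH] Hmn.
- have -> : m = 0%N by lia. lra.
- case: (leqP m n) => Hm.
  + rewrite psumS; have := IH Hm; have := H n; lra.
  + have -> : m = n.+1 by lia. lra.
Qed.

Lemma filterlim_sq_sqrt :
  filterlim (fun n => (Nat.sqrt n * Nat.sqrt n)%coq_nat) eventually eventually.
Proof.
move=> P [N HN]; exists (N * N)%coq_nat => n Hn; apply: HN.
have : (Nat.sqrt (N*N) <= Nat.sqrt n)%coq_nat by apply: Nat.sqrt_le_mono.
rewrite Nat.sqrt_square => H; nia.
Qed.

Lemma filterlim_sq_sqrtS :
  filterlim (fun n => (S (Nat.sqrt n) * S (Nat.sqrt n))%coq_nat) eventually eventually.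
Proof.
move=> P [N HN]; exists (N * N)%coq_nat => n Hn; apply: HN.
have : (Nat.sqrt (N*N) <= Nat.sqrt n)%coq_nat by apply: Nat.sqrt_le_mono.
rewrite Nat.sqrt_square => H; nia.
Qed.

Lemma block_series p q l :
  (forall j, 0 <= p j) -> (forall j, 0 <= q j) ->
  (forall b, psum p (b * b)%coq_nat = psum q (b * b)%coq_nat) ->
  is_series p l -> is_series q l.
Proof.
move=> Hp Hq Hb /is_series_psum Hl; apply/is_series_psum.
apply: (is_lim_seq_le_le (fun n => psum p (Nat.sqrt n * Nat.sqrt n)%coq_nat) _
          (fun n => psum p (S (Nat.sqrt n) * S (Nat.sqrt n))%coq_nat)).
- move=> n; have [H1 H2] := Nat.sqrt_spec n (Nat.le_0_l n).
  rewrite !Hb; split; apply: psum_mono => //; apply/leP; lia.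
- exact: (is_lim_seq_subseq _ _ _ filterlim_sq_sqrt Hl).
- exact: (is_lim_seq_subseq _ _ _ filterlim_sq_sqrtS Hl).
Qed.

Lemma series_term_le p k : (forall j, 0 <= p j) -> ex_series p -> p k <= Series p.
Proof.
move=> Hp He.
have Hs : is_series (fun j => if Nat.eqb j k then p k else 0) (p k).
  have := series_fin (fun j => if Nat.eqb j k then p k else 0) k.+1.
  have -> : psum (fun j => if Nat.eqb j k then p k else 0) k.+1 = p k.
    rewrite psumS Nat.eqb_refl (psum_ext _ (fun _ => 0)).
    + rewrite /psum big1_eq; lra.
    + move=> j Hj; have -> // : Nat.eqb j k = false by apply/Nat.eqb_neq; lia.
  apply => j Hj; have -> // : Nat.eqb j k = false by apply/Nat.eqb_neq; lia.
rewrite -(is_series_unique _ _ Hs); apply: Series_le => // n.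
case: (Nat.eqb_spec n k) => [->|_]; split; try lra; exact: Hp.
Qed.

Notation rsum m n F := (\big[Rplus/0]_(m <= i < n) F i).

Lemma rsum_sub m n (F G : nat -> R) :
  \big[Rplus/0]_(m <= i < n) (F i - G i) = rsum m n F - rsum m n G.
Proof.
have -> : \big[Rplus/0]_(m <= i < n) (F i - G i) =
          \big[Rplus/0]_(m <= i < n) (F i + (-1) * G i).
  by apply: eq_bigr => i _; ring.
rewrite big_split /= -big_distrr /=; ring.
Qed.

Lemma rsum_delta m n (f : nat -> R) k : (m <= k < n)%N ->
  \big[Rplus/0]_(m <= i < n) (f i * (if Nat.eqb k i then 1 else 0)) = f k.
Proof.
move=> /andP [Hk1 Hk2].
rewrite (big_cat_nat (n:=k) (m:=m) (p:=n)) /=; [|lia|lia].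
rewrite (big_ltn Hk2).
rewrite Nat.eqb_refl.
rewrite big1_seq.
- rewrite big1_seq; first ring.
  move=> i /andP [_]; rewrite mem_iota => Hi.
  have -> : Nat.eqb k i = false by apply/Nat.eqb_neq; lia.
  ring.
- move=> i /andP [_]; rewrite mem_iota => Hi.
  have -> : Nat.eqb k i = false by apply/Nat.eqb_neq; lia.
  ring.
Qed.

Lemma fin_iso m n (w : nat -> nat -> R) (z : nat -> R) :
  (forall i i', (m <= i < n)%N -> (m <= i' < n)%N ->
     \big[Rplus/0]_(m <= j < n) (w i j * w i' j) = if Nat.eqb i i' then 1 else 0) ->
  \big[Rplus/0]_(m <= j < n) (\big[Rplus/0]_(m <= i < n) (z i * w i j)) ^ 2 =
  \big[Rplus/0]_(m <= i < n) (z i ^ 2).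
Proof.
move=> Hw.
have E : forall j, (\big[Rplus/0]_(m <= i < n) (z i * w i j)) ^ 2 =
   \big[Rplus/0]_(m <= i < n) \big[Rplus/0]_(m <= i' < n) (z i * z i' * (w i j * w i' j)).
  move=> j; rewrite /= Rmult_1_r big_distrl /=; apply: eq_bigr => i _.
  rewrite big_distrr /=; apply: eq_bigr => i' _; ring.
rewrite (eq_bigr _ (fun j _ => E j)).
rewrite exchange_big_nat /=.
rewrite big_nat_cond [X in _ = X]big_nat_cond.
apply: eq_bigr => i /andP [Hi _].
rewrite exchange_big_nat /=.
rewrite (eq_big_nat _ _ (F2 := fun i' => (z i * z i') * (if Nat.eqb i i' then 1 else 0))).
- by rewrite (@rsum_delta _ _ (fun i' => z i * z i')) //= Rmult_1_r.
- move=> i' Hi'; rewrite -big_distrr /= Hw //.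
Qed.

Lemma fin_inv m n (w : nat -> nat -> R) (z : nat -> R) j :
  (forall j j', (m <= j < n)%N -> (m <= j' < n)%N ->
     \big[Rplus/0]_(m <= i < n) (w i j * w i j') = if Nat.eqb j j' then 1 else 0) ->
  (m <= j < n)%N ->
  \big[Rplus/0]_(m <= i < n) ((\big[Rplus/0]_(m <= j' < n) (z j' * w i j')) * w i j) = z j.
Proof.
move=> Hw Hj.
rewrite (eq_bigr (fun i => \big[Rplus/0]_(m <= j' < n) (z j' * (w i j' * w i j)))).
- rewrite exchange_big_nat /=.
  rewrite (eq_big_nat _ _ (F2 := fun j' => z j' * (if Nat.eqb j j' then 1 else 0))).
  + by rewrite rsum_delta.
  + move=> j' Hj'; rewrite -big_distrr /= Hw //.
    case: (Nat.eqb_spec j' j); case: (Nat.eqb_spec j j') => //; lia.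
- move=> i _; rewrite big_distrl /=; apply: eq_bigr => j' _; ring.
Qed.

Definition sq (b : nat) : nat := (b * b)%N.
Definition blk (i : nat) : nat := Nat.sqrt i.

Lemma blk_in b i : (sq b <= i < sq b.+1)%N -> blk i = b.
Proof.
rewrite /sq /blk => /andP [H1 H2]; apply: Nat.sqrt_unique.
split; apply/leP; [exact H1| exact H2].
Qed.

Lemma blk_spec i : (sq (blk i) <= i < sq (blk i).+1)%N.
Proof.
have [H1 H2] := Nat.sqrt_spec i (Nat.le_0_l i).
rewrite /sq /blk; apply/andP; split; apply/leP; [exact H1|exact H2].
Qed.

Lemma sq_mono b c : (b <= c)%N -> (sq b <= sq c)%N.
Proof. rewrite /sq => H; by apply: leq_mul. Qed.

Lemma blk_ge b j : (sq b <= j)%N -> (b <= blk j)%N.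
Proof.
rewrite /sq /blk => H.
have : (Nat.sqrt (b*b) <= Nat.sqrt j)%coq_nat by apply: Nat.sqrt_le_mono; apply/leP.
rewrite Nat.sqrt_square => H'; apply/leP; exact H'.
Qed.

Definition Tm (u : nat -> vec) (z : vec) : vec :=
  fun j => \big[Rplus/0]_(sq (blk j) <= i < sq (blk j).+1) (z i * u i j).
Definition Tt (u : nat -> vec) (z : vec) : vec :=
  fun i => \big[Rplus/0]_(sq (blk i) <= j < sq (blk i).+1) (z j * u i j).

Definition block_ok (u : nat -> vec) : Prop :=
  (forall i j, blk i <> blk j -> u i j = 0) /\
  (forall b i i', (sq b <= i < sq b.+1)%N -> (sq b <= i' < sq b.+1)%N ->
     \big[Rplus/0]_(sq b <= j < sq b.+1) (u i j * u i' j) = if Nat.eqb i i' then 1 else 0) /\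
  (forall b j j', (sq b <= j < sq b.+1)%N -> (sq b <= j' < sq b.+1)%N ->
     \big[Rplus/0]_(sq b <= i < sq b.+1) (u i j * u i j') = if Nat.eqb j j' then 1 else 0).

Lemma Tm_block u z b j : (sq b <= j < sq b.+1)%N ->
  Tm u z j = \big[Rplus/0]_(sq b <= i < sq b.+1) (z i * u i j).
Proof. by move=> H; rewrite /Tm (blk_in _ _ H). Qed.

Lemma Tt_block u z b i : (sq b <= i < sq b.+1)%N ->
  Tt u z i = \big[Rplus/0]_(sq b <= j < sq b.+1) (z j * u i j).
Proof. by move=> H; rewrite /Tt (blk_in _ _ H). Qed.

Lemma psum_blocks (f g : nat -> R) :
  (forall b, \big[Rplus/0]_(sq b <= j < sq b.+1) f j = \big[Rplus/0]_(sq b <= j < sq b.+1) g j) ->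
  forall b, psum f (b * b)%coq_nat = psum g (b * b)%coq_nat.
Proof.
move=> H b; change (psum f (sq b) = psum g (sq b)).
elim: b => [|b IH]; first by rewrite /sq /= !psum0.
rewrite /psum (big_cat_nat (n := sq b)) //=; last by apply: sq_mono.
rewrite [X in _ = X](big_cat_nat (n := sq b)) //=; last by apply: sq_mono.
by rewrite -/(psum f (sq b)) -/(psum g (sq b)) IH H.
Qed.

Lemma Tm_psum u z : block_ok u ->
  forall b, psum (fun j => Tm u z j ^ 2) (b * b)%coq_nat = psum (fun i => z i ^ 2) (b * b)%coq_nat.
Proof.
move=> [_ [Hr _]]; apply: psum_blocks => b.
rewrite (eq_big_nat _ _ (F2 := fun j => (\big[Rplus/0]_(sq b <= i < sq b.+1) (z i * u i j)) ^ 2)).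
- by apply: fin_iso => i i' Hi Hi'; apply: Hr.
- by move=> j Hj; rewrite (Tm_block _ _ _ _ Hj).
Qed.

Lemma Tt_psum u z : block_ok u ->
  forall b, psum (fun i => Tt u z i ^ 2) (b * b)%coq_nat = psum (fun j => z j ^ 2) (b * b)%coq_nat.
Proof.
move=> [_ [_ Hc]]; apply: psum_blocks => b.
rewrite (eq_big_nat _ _ (F2 := fun i => (\big[Rplus/0]_(sq b <= j < sq b.+1) (z j * u i j)) ^ 2)).
- by apply: (@fin_iso _ _ (fun j i => u i j)) => j j' Hj Hj'; apply: Hc.
- by move=> i Hi; rewrite (Tt_block _ _ _ _ Hi).
Qed.

Lemma sq_nonneg (x : R) : 0 <= x ^ 2.
Proof. nra. Qed.

Lemma Tm_series u z l : block_ok u ->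
  (is_series (fun i => z i ^ 2) l <-> is_series (fun j => Tm u z j ^ 2) l).
Proof.
move=> Hu; split; apply: block_series => //; try (move=> j; exact: sq_nonneg).
- by move=> b; rewrite Tm_psum.
- by move=> b; rewrite Tm_psum.
Qed.

Lemma Tt_series u z l : block_ok u ->
  is_series (fun j => z j ^ 2) l -> is_series (fun i => Tt u z i ^ 2) l.
Proof.
move=> Hu; apply: block_series => //; try (move=> j; exact: sq_nonneg).
by move=> b; rewrite Tt_psum.
Qed.

Lemma Tm_Tt u z j : block_ok u -> Tm u (Tt u z) j = z j.
Proof.
move=> [_ [_ Hc]].
have Hj := blk_spec j.
rewrite /Tm.
rewrite (eq_big_nat _ _ (F2 := fun i => (\big[Rplus/0]_(sq (blk j) <= j' < sq (blk j).+1) (z j' * u i j')) * u i j)).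
- by apply: fin_inv => // j1 j2 H1 H2; apply: Hc.
- by move=> i Hi; rewrite (Tt_block _ _ _ _ Hi).
Qed.

Lemma Tm_sub u x y j : Tm u (vsub x y) j = Tm u x j - Tm u y j.
Proof.
rewrite /Tm /vsub -rsum_sub; apply: eq_bigr => i _; ring.
Qed.

Definition trunc (a : nat -> R) (n : nat) : vec := fun i => if Nat.ltb i n then a i else 0.

Lemma lin_comb_canon a n j : lin_comb canon a n j = trunc a n j.
Proof.
rewrite /trunc; elim: n => [|n IH] /=.
- by case: (Nat.ltb_spec j 0) => // H; lia.
- rewrite IH /canon.
  case: (Nat.ltb_spec j n); case: (Nat.ltb_spec j n.+1); case: (Nat.eqb_spec n j);
    move=> *; try lia; subst; ring.
Qed.

Lemma lin_comb_Tm u a n j : block_ok u -> lin_comb u a n j = Tm u (trunc a n) j.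
Proof.
move=> [Hs _]; elim: n => [|n IH] /=.
- rewrite /Tm /trunc big1 //= => i _.
  by case: (Nat.ltb_spec i 0) => H; [lia| ring].
- rewrite IH /Tm; symmetry.
  rewrite (eq_bigr (fun i => trunc a n i * u i j + (a n * u i j) * (if Nat.eqb n i then 1 else 0))).
  + rewrite big_split /=; f_equal.
    have Hj := blk_spec j.
    case: (boolP (sq (blk j) <= n < sq (blk j).+1)%N) => Hn.
    * by rewrite (@rsum_delta _ _ (fun i => a n * u i j)).
    * have -> : u n j = 0.
        apply: Hs => E; move: Hn; rewrite -E; by rewrite blk_spec.
      rewrite big1_seq; first ring.
      move=> i /andP [_]; rewrite mem_iota => Hi.
      case: (Nat.eqb_spec n i) => E; last ring.
      subst i; move: Hn; rewrite -(subnKC (sq_mono _ _ (leqnSn (blk j)))) Hi; done.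
  + move=> i _; rewrite /trunc.
    case: (Nat.ltb_spec i n); case: (Nat.ltb_spec i n.+1); case: (Nat.eqb_spec n i);
      move=> *; try lia; subst; ring.
Qed.

Lemma trunc_series a n :
  is_series (fun i => trunc a n i ^ 2) (psum (fun i => trunc a n i ^ 2) n).
Proof.
apply: series_fin => j Hj; rewrite /trunc.
case: (Nat.ltb_spec j n) => H; [lia| ring].
Qed.

Lemma isometric_of_block u : block_ok u -> isometric_to_canon u.
Proof.
move=> Hu a n; rewrite /l2norm; f_equal.
rewrite (Series_ext _ (fun j => Tm u (trunc a n) j ^ 2)); last first.
  by move=> j; rewrite lin_comb_Tm.
rewrite [X in _ = X](Series_ext _ (fun j => trunc a n j ^ 2)); last first.
  by move=> j; rewrite lin_comb_canon.
have H := trunc_series a n.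
rewrite (is_series_unique _ _ H).
apply: is_series_unique; exact: (proj1 (Tm_series u (trunc a n) _ Hu) H).
Qed.

Lemma sqrt_lim (e : nat -> R) : is_lim_seq e 0 -> (forall n, 0 <= e n) ->
  is_lim_seq (fun n => sqrt (e n)) 0.
Proof.
move=> /is_lim_seq_spec He Hp; apply/is_lim_seq_spec => eps.
have Heps : 0 < eps * eps by have := cond_pos eps; nra.
case: (He (mkposreal _ Heps)) => N HN; exists N => n Hn.
have := HN n Hn; rewrite /= Rminus_0_r Rabs_right; last by apply: Rle_ge.
move=> H1.
rewrite Rminus_0_r Rabs_right; last by apply: Rle_ge; apply: sqrt_pos.
have := cond_pos eps => Hpos.
rewrite -(sqrt_square eps); last lra.
apply: sqrt_lt_1 => //; nra.
Qed.

Lemma series_nonneg p l : is_series p l -> (forall j, 0 <= p j) -> 0 <= l.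
Proof.
move=> /is_series_psum H Hp.
have := is_lim_seq_le (fun _ => 0) (psum p) 0 l (fun n => psum_ge0 p n Hp)
  (is_lim_seq_const 0) H.
by [].
Qed.

Lemma key_series u x X b n : block_ok u -> is_series (fun i => x i ^ 2) X ->
  is_series (fun i => (vsub (trunc b n) (Tt u x) i) ^ 2)
     (X + psum (fun i => (b i - Tt u x i) ^ 2 - Tt u x i ^ 2) n) /\
  is_series (fun j => (vsub (lin_comb u b n) x j) ^ 2)
     (X + psum (fun i => (b i - Tt u x i) ^ 2 - Tt u x i ^ 2) n).
Proof.
move=> Hu HX.
set y := Tt u x.
have Hy : is_series (fun i => y i ^ 2) X by apply: Tt_series.
set g := fun i => (b i - y i) ^ 2 - y i ^ 2.
have Hg : is_series (fun i => if Nat.ltb i n then g i else 0) (psum g n).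
  rewrite (psum_ext g (fun i => if Nat.ltb i n then g i else 0)).
  - apply: series_fin => j Hj; case: (Nat.ltb_spec j n) => //; lia.
  - move=> j Hj; case: (Nat.ltb_spec j n) => //; lia.
have H1 : is_series (fun i => (vsub (trunc b n) y i) ^ 2) (X + psum g n).
  apply: (is_series_ext (fun i => plus (y i ^ 2) (if Nat.ltb i n then g i else 0))).
  - move=> i; rewrite /plus /= /vsub /trunc /g.
    case: (Nat.ltb_spec i n) => _; ring.
  - exact: is_series_plus.
split => //.
apply: (is_series_ext (fun j => Tm u (vsub (trunc b n) y) j ^ 2)).
- move=> j; rewrite Tm_sub /vsub lin_comb_Tm // /y Tm_Tt //.
- exact: (proj1 (Tm_series u _ _ Hu) H1).
Qed.

Lemma basis_of_block u : block_ok u -> is_basis u.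
Proof.
move=> Hu; have [Hs _] := Hu; split.
- move=> i; exists (psum (fun j => u i j ^ 2) (sq (blk i).+1)).
  apply: series_fin => j Hj.
  rewrite Hs; first ring.
  move=> E; have := blk_ge _ _ Hj; rewrite -E; lia.
- move=> x [X HX].
  set y := Tt u x.
  have Hy : is_series (fun i => y i ^ 2) X by apply: Tt_series.
  exists y; split.
  + rewrite /expands.
    have E : forall n, l2norm (vsub (lin_comb u y n) x) =
        sqrt (X + psum (fun i => (y i - y i) ^ 2 - y i ^ 2) n).
      move=> n; rewrite /l2norm; f_equal.
      exact: (is_series_unique _ _ (proj2 (key_series u x X y n Hu HX))).
    apply: (is_lim_seq_ext _ _ _ (fun n => esym (E n))).
    apply: sqrt_lim.
    * have -> : (0 = X + - X)%R by ring.
      apply: is_lim_seq_plus'; first exact: is_lim_seq_const.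
      have H := proj1 (is_series_psum _ _) Hy.
      have H' := proj1 (is_lim_seq_opp _ _) H.
      apply: (is_lim_seq_ext _ _ _ _ H') => n /=.
      elim: n => [|n IH]; first by rewrite !psum0; ring.
      rewrite !psumS -IH; ring.
    * move=> n; apply: (series_nonneg _ _ (proj1 (key_series u x X y n Hu HX))).
      move=> j; exact: sq_nonneg.
  + move=> b Hb k.
    have Hle : forall n, (k < n)%N -> Rabs (b k - y k) <= l2norm (vsub (lin_comb u b n) x).
      move=> n Hn.
      have [H1 H2] := key_series u x X b n Hu HX.
      rewrite /l2norm (is_series_unique _ _ H2) -(is_series_unique _ _ H1).
      rewrite -sqrt_Rsqr_abs; apply: sqrt_le_1_alt.
      have -> : Rsqr (b k - y k) = (vsub (trunc b n) y k) ^ 2.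
        rewrite /vsub /trunc /Rsqr; case: (Nat.ltb_spec k n) => H; [ring|lia].
      apply: (series_term_le (fun i => vsub (trunc b n) y i ^ 2)); first (move=> j; exact: sq_nonneg).
      by exists (X + psum (fun i => (b i - Tt u x i) ^ 2 - Tt u x i ^ 2) n).
    have := is_lim_seq_le_loc (fun _ => Rabs (b k - y k)) _ _ 0
      (ex_intro _ k.+1 (fun n Hn => Hle n (introT leP Hn))) (is_lim_seq_const _) Hb.
    move=> /= H0.
    have H1 := Rabs_pos (b k - y k).
    have : b k - y k = 0 by apply: Rabs_eq_0; lra.
    lra.
Qed.

Definition Fr (N : nat) (y : R) : R := sin (INR N * y) / sin y.
Definition ct (x : R) : R := cos x / sin x.
Definition Scyc (N : nat) (h : R -> R) (al : R) : R :=
  \big[Rplus/0]_(0 <= t < N) h (al + INR t * PI / INR N).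

Lemma INR_pos N : (0 < N)%N -> 0 < INR N.
Proof. move=> H; apply: lt_0_INR; apply/ltP; exact H. Qed.

Lemma Scyc_shift N h al : (0 < N)%N -> (forall x, h (x + PI) = h x) ->
  Scyc N h (al + PI / INR N) = Scyc N h al.
Proof.
move=> HN Hh; have HN' := INR_pos N HN.
rewrite /Scyc.
set F := fun t => h (al + INR t * PI / INR N).
rewrite (eq_bigr (fun t => F t.+1)); last first.
  move=> t _; rewrite /F S_INR; f_equal; field; lra.
have E1 := @big_nat_recl _ 0 Rplus N 0 F (leq0n N).
have E2 := @big_nat_recr _ 0 Rplus N 0 F (leq0n N).
have E3 : F N = F 0%N.
  rewrite /F -[h (al + INR 0 * PI / INR N)]Hh; f_equal; simpl; field; lra.
rewrite E2 E3 in E1.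
have := E1; rewrite /=. move=> E4. change (\big[Rplus/0]_(0 <= i < N) F i.+1 = \big[Rplus/0]_(0 <= i < N) F i). lra.
Qed.

Lemma Scyc_shift_n N h al m : (0 < N)%N -> (forall x, h (x + PI) = h x) ->
  Scyc N h (al + INR m * PI / INR N) = Scyc N h al.
Proof.
move=> HN Hh; have HN' := INR_pos N HN.
elim: m => [|m IH]; first by rewrite /= Rmult_0_l /Rdiv Rmult_0_l Rplus_0_r.
rewrite -IH -(Scyc_shift N h (al + INR m * PI / INR N)) //.
rewrite /Scyc; apply: eq_bigr => t _; f_equal; rewrite S_INR; field; lra.
Qed.

Lemma sin_nPI x t : sin (x + INR t * PI) = (-1) ^ t * sin x.
Proof.
elim: t => [|t IH]; first by rewrite /= Rmult_0_l Rplus_0_r Rmult_1_l.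
rewrite S_INR.
have -> : x + (INR t + 1) * PI = (x + INR t * PI) + PI by ring.
rewrite neg_sin IH /=; ring.
Qed.

Lemma ct_per x : ct (x + PI) = ct x.
Proof.
rewrite /ct neg_sin neg_cos.
case: (Req_dec (sin x) 0) => H.
- rewrite H Ropp_0 /Rdiv Rinv_0; ring.
- field; exact H.
Qed.

Lemma Fr2_per N x : Fr N (x + PI) ^ 2 = Fr N x ^ 2.
Proof.
rewrite /Fr neg_sin.
have -> : INR N * (x + PI) = INR N * x + INR N * PI by ring.
rewrite sin_nPI.
case: (Req_dec (sin x) 0) => H.
- rewrite H Ropp_0 /Rdiv Rinv_0; ring.
- have E : (-1) ^ N * (-1) ^ N = 1.
    by rewrite -pow_add; replace (N + N)%coq_nat with (2 * N)%coq_nat by lia; apply: pow_1_even.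
  have E2 : forall a, (- 1) ^ N * a / - sin x * ((-1) ^ N * a / - sin x * 1) =
     ((-1) ^ N * (-1) ^ N) * (a / sin x * (a / sin x * 1)).
    move=> a; field; exact H.
  by rewrite /= E2 E Rmult_1_l.
Qed.

Lemma prod_id N x y : sin x <> 0 -> sin y <> 0 -> sin (y - x) <> 0 ->
  Fr N x * Fr N y = sin (INR N * x) * sin (INR N * y) / sin (y - x) * (ct x - ct y).
Proof.
move=> Hx Hy Hxy; rewrite /Fr /ct.
have E : sin (y - x) = sin y * cos x - cos y * sin x by rewrite sin_minus.
rewrite E; rewrite E in Hxy.
field; repeat split; auto.
Qed.

Lemma orth_gen N al m : (0 < m)%N -> (m < N)%N ->
  (forall t, sin (al + INR t * PI / INR N) <> 0) ->
  \big[Rplus/0]_(0 <= t < N)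
     (Fr N (al + INR t * PI / INR N) * Fr N ((al + INR m * PI / INR N) + INR t * PI / INR N)) = 0.
Proof.
move=> Hm HmN Hs.
have HN : (0 < N)%N by lia.
have HN' := INR_pos N HN.
have Hm' : 0 < INR m by apply: INR_pos.
have HmN' : INR m < INR N by apply: lt_INR; apply/ltP.
set s := sin (INR m * PI / INR N).
have Hs0 : 0 < s.
  apply: sin_gt_0.
  - apply: Rdiv_lt_0_compat => //; have := PI_RGT_0; nra.
  - apply/Rlt_div_l => //; have := PI_RGT_0; nra.
set K := (-1) ^ m * sin (INR N * al) ^ 2.
rewrite (eq_bigr (fun t => K / s * (ct (al + INR t * PI / INR N) -
                                   ct ((al + INR m * PI / INR N) + INR t * PI / INR N)))).
- rewrite -big_distrr /= rsum_sub.
  rewrite -/(Scyc N ct al) -/(Scyc N ct (al + INR m * PI / INR N)).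
  rewrite Scyc_shift_n //; first ring.
  exact: ct_per.
- move=> t _.
  have Hy : sin (al + INR m * PI / INR N + INR t * PI / INR N) <> 0.
    have -> : al + INR m * PI / INR N + INR t * PI / INR N =
              al + INR (m + t) * PI / INR N by rewrite plus_INR; field; lra.
    exact: Hs.
  rewrite prod_id //; last first.
    have -> : al + INR m * PI / INR N + INR t * PI / INR N - (al + INR t * PI / INR N) =
              INR m * PI / INR N by ring.
    change (s <> 0); lra.
  have -> : al + INR m * PI / INR N + INR t * PI / INR N - (al + INR t * PI / INR N) =
            INR m * PI / INR N by ring.
  rewrite -/s; f_equal; f_equal.
  have -> : INR N * (al + INR t * PI / INR N) = INR N * al + INR t * PI by field; lra.
  have -> : INR N * (al + INR m * PI / INR N + INR t * PI / INR N) =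
            INR N * al + INR (m + t) * PI by rewrite plus_INR; field; lra.
  rewrite !sin_nPI pow_add /K.
  have E : (-1) ^ t * (-1) ^ t = 1.
    by rewrite -pow_add; replace (t + t)%coq_nat with (2 * t)%coq_nat by lia; apply: pow_1_even.
  have -> : (-1) ^ t * sin (INR N * al) * ((-1) ^ m * (-1) ^ t * sin (INR N * al)) =
            ((-1) ^ t * (-1) ^ t) * ((-1) ^ m * sin (INR N * al) ^ 2) by ring.
  rewrite E; ring.
Qed.

Definition th (N : nat) (d : R) : R := PI * (d + /2) / INR N.
Definition CN (N : nat) : R := Scyc N (fun y => Fr N y ^ 2) (th N 0).
Definition q (N : nat) (d : R) : R := Fr N (th N d) / sqrt (CN N).

Definition ub (i : nat) : vec := fun j =>
  if Nat.eqb (blk i) (blk j) then q (2 * blk i + 1) (INR j - INR i) else 0.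

Lemma sin_th_nz N z : (0 < N)%N -> sin (PI * (IZR z + /2) / INR N) <> 0.
Proof.
move=> HN H; have HN' := INR_pos N HN.
have [k Hk] := sin_eq_0_0 _ H.
have E : IZR (2 * z + 1) = IZR (2 * k * Z.of_nat N).
  rewrite plus_IZR !mult_IZR -INR_IZR_INZ.
  have := PI_RGT_0 => Hpi.
  have Hk' : (IZR z + /2) = IZR k * INR N.
    apply: (Rmult_eq_reg_l (PI / INR N)); last by apply: Rgt_not_eq; apply: Rdiv_lt_0_compat.
    rewrite -[X in X = _]/(PI / INR N * (IZR z + / 2)).
    have -> : PI / INR N * (IZR z + / 2) = PI * (IZR z + / 2) / INR N by field; lra.
    rewrite Hk; field; lra.
  simpl; lra.
have := eq_IZR _ _ E; lia.
Qed.

Lemma Fr_even N x : Fr N (- x) = Fr N x.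
Proof.
rewrite /Fr -Ropp_mult_distr_r !sin_neg.
case: (Req_dec (sin x) 0) => H.
- by rewrite H Ropp_0 /Rdiv Rinv_0 !Rmult_0_r.
- field; exact H.
Qed.

Lemma gram N c k k' : (0 < N)%N -> (k < N)%N -> (k' < N)%N ->
  (forall z : Z, sin (c + IZR z * PI / INR N) <> 0) ->
  \big[Rplus/0]_(0 <= t < N)
     (Fr N (c - INR k * PI / INR N + INR t * PI / INR N) *
      Fr N (c - INR k' * PI / INR N + INR t * PI / INR N)) =
  if Nat.eqb k k' then Scyc N (fun y => Fr N y ^ 2) c else 0.
Proof.
move=> HN Hk Hk' Hs; have HN' := INR_pos N HN.
case: (Nat.eqb_spec k k') => [<-|Hne].
- have E := Scyc_shift_n N (fun y => Fr N y ^ 2) (c - INR k * PI / INR N) k HN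
     (fun x => Fr2_per N x).
  have E' : c - INR k * PI / INR N + INR k * PI / INR N = c by field; lra.
  rewrite E' in E; rewrite E.
  rewrite /Scyc; apply: eq_bigr => t _; simpl; ring.
- have Hsin : forall a, (forall t, sin (c - INR a * PI / INR N + INR t * PI / INR N) <> 0).
    move=> a t.
    have -> : c - INR a * PI / INR N + INR t * PI / INR N =
              c + IZR (Z.of_nat t - Z.of_nat a) * PI / INR N.
      rewrite minus_IZR -!INR_IZR_INZ; field; lra.
    exact: Hs.
  case: (ltnP k k') => Hlt.
  + have E := orth_gen N (c - INR k' * PI / INR N) (k' - k) ltac:(lia) ltac:(lia) (Hsin k').
    rewrite -[RHS]E; apply: eq_bigr => t _; rewrite Rmult_comm; f_equal; f_equal.
    rewrite minus_INR; [field; lra| apply/leP; lia].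
  + have E := orth_gen N (c - INR k * PI / INR N) (k - k') ltac:(lia) ltac:(lia) (Hsin k).
    rewrite -[RHS]E; apply: eq_bigr => t _; f_equal; f_equal.
    rewrite minus_INR; [field; lra| apply/leP; lia].
Qed.

Lemma rsum_ge0 m n (F : nat -> R) : (forall i, 0 <= F i) -> 0 <= \big[Rplus/0]_(m <= i < n) F i.
Proof. move=> H; apply: (big_ind (fun x => 0 <= x)) => //; [lra | move=> x y; lra]. Qed.

Lemma th0_nz N : (0 < N)%N -> forall z : Z, sin (th N 0 + IZR z * PI / INR N) <> 0.
Proof.
move=> HN z; have HN' := INR_pos N HN.
have -> : th N 0 + IZR z * PI / INR N = PI * (IZR z + /2) / INR N by rewrite /th; field; lra.
exact: sin_th_nz.
Qed.

Lemma th1_nz N : (0 < N)%N -> forall z : Z, sin (th N 0 - PI / INR N + IZR z * PI / INR N) <> 0.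
Proof.
move=> HN z; have HN' := INR_pos N HN.
have -> : th N 0 - PI / INR N + IZR z * PI / INR N = PI * (IZR (z - 1) + /2) / INR N.
  by rewrite minus_IZR /th; field; lra.
exact: sin_th_nz.
Qed.

Lemma CN_pos N : (0 < N)%N -> 0 < CN N.
Proof.
move=> HN; have HN' := INR_pos N HN.
rewrite /CN /Scyc (big_ltn HN) /=.
have H0 := rsum_ge0 1 N (fun t => Fr N (th N 0 + INR t * PI / INR N) ^ 2)
   (fun t => sq_nonneg _).
have : Fr N (th N 0 + 0 * PI / INR N) <> 0.
  rewrite /Fr.
  have -> : INR N * (th N 0 + 0 * PI / INR N) = PI / 2 by rewrite /th; field; lra.
  rewrite sin_PI2.
  have := th0_nz N HN 0; rewrite /= Rmult_0_l /Rdiv Rmult_0_l => H.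
  rewrite Rmult_1_l; by apply: Rinv_neq_0_compat.
move=> Hne.
have : 0 < Fr N (th N 0 + 0 * PI / INR N) * (Fr N (th N 0 + 0 * PI / INR N) * 1).
  rewrite Rmult_1_r; nra.
move: H0; rewrite /=; lra.
Qed.

Lemma div_prod (A B : nat -> R) s m n :
  \big[Rplus/0]_(m <= t < n) (A t / s * (B t / s)) =
  (\big[Rplus/0]_(m <= t < n) (A t * B t)) / (s * s).
Proof.
rewrite /Rdiv big_distrl /=; apply: eq_bigr => t _; rewrite Rinv_mult; ring.
Qed.

Lemma shift_block b (F : nat -> R) :
  \big[Rplus/0]_(sq b <= j < sq b.+1) F j =
  \big[Rplus/0]_(0 <= t < 2 * b + 1) F (t + sq b)%N.
Proof.
rewrite -{1}(add0n (sq b)) big_addn.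
have -> : (sq b.+1 - sq b = 2 * b + 1)%N by rewrite /sq; nia.
by [].
Qed.

Lemma ub_in b i j : (sq b <= i < sq b.+1)%N -> (sq b <= j < sq b.+1)%N ->
  ub i j = q (2 * b + 1) (INR j - INR i).
Proof.
move=> Hi Hj; rewrite /ub (blk_in _ _ Hi) (blk_in _ _ Hj) Nat.eqb_refl //.
Qed.

Lemma block_ok_ub : block_ok ub.
Proof.
split; [|split].
- move=> i j H; rewrite /ub; case: (Nat.eqb_spec (blk i) (blk j)) => //.
- move=> b i i' Hi Hi'.
  set N := (2 * b + 1)%N.
  have HN : (0 < N)%N by rewrite /N; lia.
  have HN' := INR_pos N HN.
  have HC := CN_pos N HN.
  rewrite (eq_big_nat _ _ (F2 := fun j => q N (INR j - INR i) * q N (INR j - INR i'))); last first.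
    by move=> j Hj; rewrite (ub_in _ _ _ Hi Hj) (ub_in _ _ _ Hi' Hj).
  rewrite shift_block -/N /q div_prod sqrt_sqrt; last lra.
  have EN : N = (2 * b + 1)%N by [].
  have Hsq : sq b.+1 = (sq b + 2 * b + 1)%N by rewrite /sq; nia.
  clearbody N.
  set k := (i - sq b)%N; set k' := (i' - sq b)%N.
  have Ei : i = (k + sq b)%N by rewrite /k; lia.
  have Ei' : i' = (k' + sq b)%N by rewrite /k'; lia.
  rewrite (eq_bigr (fun t => Fr N (th N 0 - INR k * PI / INR N + INR t * PI / INR N) *
                             Fr N (th N 0 - INR k' * PI / INR N + INR t * PI / INR N))); last first.
    move=> t _; rewrite Ei Ei' !plus_INR; f_equal; f_equal; rewrite /th; field; lra.
  rewrite gram //; [| rewrite /k EN; move: Hi Hi'; rewrite Hsq; lia | rewrite /k' EN; move: Hi Hi'; rewrite Hsq; lia | exact: th0_nz].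
  rewrite -/(CN N).
  case: (Nat.eqb_spec k k'); case: (Nat.eqb_spec i i') => *; try lia.
  + field; lra.
  + rewrite /Rdiv Rmult_0_l //.
- move=> b j j' Hj Hj'.
  set N := (2 * b + 1)%N.
  have HN : (0 < N)%N by rewrite /N; lia.
  have HN' := INR_pos N HN.
  have HC := CN_pos N HN.
  rewrite (eq_big_nat _ _ (F2 := fun i => q N (INR j - INR i) * q N (INR j' - INR i))); last first.
    by move=> i Hi; rewrite (ub_in _ _ _ Hi Hj) (ub_in _ _ _ Hi Hj').
  rewrite shift_block -/N /q div_prod sqrt_sqrt; last lra.
  have EN : N = (2 * b + 1)%N by [].
  have Hsq : sq b.+1 = (sq b + 2 * b + 1)%N by rewrite /sq; nia.
  clearbody N.
  set k := (j - sq b)%N; set k' := (j' - sq b)%N.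
  have Ej : j = (k + sq b)%N by rewrite /k; lia.
  have Ej' : j' = (k' + sq b)%N by rewrite /k'; lia.
  rewrite (eq_bigr (fun t => Fr N (th N 0 - PI / INR N - INR k * PI / INR N + INR t * PI / INR N) *
                             Fr N (th N 0 - PI / INR N - INR k' * PI / INR N + INR t * PI / INR N))); last first.
    move=> t _; rewrite Ej Ej' !plus_INR -(Fr_even N (th N _)) -(Fr_even N (th N (_ + _ - _))).
    f_equal; f_equal; rewrite /th; field; lra.
  rewrite gram //; [| rewrite /k EN; move: Hj Hj'; rewrite Hsq; lia | rewrite /k' EN; move: Hj Hj'; rewrite Hsq; lia | exact: th1_nz].
  have -> : Scyc N (fun y => Fr N y ^ 2) (th N 0 - PI / INR N) = CN N.
    rewrite /CN -(Scyc_shift_n N _ (th N 0 - PI / INR N) 1) //; last by move=> x; apply: Fr2_per.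
    rewrite /Scyc; apply: eq_bigr => t _; f_equal; f_equal; simpl; field; lra.
  case: (Nat.eqb_spec k k'); case: (Nat.eqb_spec j j') => *; try lia.
  + field; lra.
  + rewrite /Rdiv Rmult_0_l //.
Qed.

Lemma rsum_recr m n (F : nat -> R) : (m <= n)%N ->
  \big[Rplus/0]_(m <= i < n.+1) F i = \big[Rplus/0]_(m <= i < n) F i + F n.
Proof. move=> H; by rewrite big_nat_recr. Qed.

Lemma sin_ge_third x : 0 <= x -> x <= PI / 2 -> x / 3 <= sin x.
Proof.
move=> H0 H1.
have Hpi := PI_4.
have [H _] := sin_bound x 0 H0 ltac:(lra).
move: H; rewrite /sin_approx /sin_term /=.

move=> H; nra.
Qed.

Lemma inv_sin2_le x : 0 < x -> x < PI -> / (sin x ^ 2) <= 9 / x ^ 2 + 9 / (PI - x) ^ 2.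
Proof.
move=> H0 H1.
have Ha : 0 < 9 / x ^ 2 by apply: Rdiv_lt_0_compat; nra.
have Hb : 0 < 9 / (PI - x) ^ 2 by apply: Rdiv_lt_0_compat; nra.
case: (Rle_lt_dec x (PI / 2)) => Hx.
- have Hs := sin_ge_third x ltac:(lra) Hx.
  have : / (sin x ^ 2) <= 9 / x ^ 2.
    rewrite /Rdiv -[9]Rinv_inv -Rinv_mult; apply: Rinv_le_contravar; nra.
  lra.
- have Hs := sin_ge_third (PI - x) ltac:(lra) ltac:(lra).
  rewrite sin_PI_x in Hs.
  have : / (sin x ^ 2) <= 9 / (PI - x) ^ 2.
    rewrite /Rdiv -[9]Rinv_inv -Rinv_mult; apply: Rinv_le_contravar; nra.
  lra.
Qed.

Lemma sum_half_sq n : \big[Rplus/0]_(0 <= t < n) / (INR t + /2) ^ 2 <= 5.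
Proof.
suff H : forall m, \big[Rplus/0]_(0 <= t < m.+1) / (INR t + /2) ^ 2 <= 5 - / (INR m + 1).
  case: n => [|n]; first by rewrite big_geq //; lra.
  have := H n; have : 0 < / (INR n + 1) by apply: Rinv_0_lt_compat; have := pos_INR n; lra.
  lra.
clear n; elim => [|n IH].
- rewrite rsum_recr // big_geq //=; lra.
- rewrite rsum_recr // !S_INR.
  have Hn := pos_INR n.
  have : / (INR n + 1 + / 2) ^ 2 <= / (INR n + 1) - / (INR n + 1 + 1).
    have -> : / (INR n + 1) - / (INR n + 1 + 1) = / ((INR n + 1) * (INR n + 1 + 1)) by field; lra.
    apply: Rinv_le_contravar; nra.
  lra.
Qed.

Definition G (J : nat) : R := \big[Rplus/0]_(0 <= d < J) / (INR d + 3/2).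

Lemma inv32_pos d : 0 < / (INR d + 3/2).
Proof. apply: Rinv_0_lt_compat; have := pos_INR d; lra. Qed.

Lemma G_mono j J : (J <= j)%N -> G J <= G j.
Proof.
move=> H; rewrite /G [X in _ <= X](big_cat_nat (n := J)) //=.
have := rsum_ge0 J j (fun d => / (INR d + 3/2))
  (fun d => Rlt_le _ _ (inv32_pos d)).
lra.
Qed.

Lemma G_ge0 J : 0 <= G J.
Proof.
apply: rsum_ge0 => d; apply: Rlt_le; apply: inv32_pos.
Qed.

Lemma G_ln J : ln (INR J + 3/2) - ln (3/2) <= G J.
Proof.
elim: J => [|J IH]; first by rewrite /G big_geq // /= Rplus_0_l; lra.
rewrite /G rsum_recr // -/(G J) S_INR.
have Hj := pos_INR J.
have : ln (INR J + 1 + 3/2) - ln (INR J + 3/2) <= / (INR J + 3/2).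
  rewrite -ln_div; try lra.
  have -> : (INR J + 1 + 3/2) / (INR J + 3/2) = 1 + / (INR J + 3/2) by field; lra.
  have Hy := exp_ineq1_le (/ (INR J + 3/2)).
  rewrite -[X in _ <= X]ln_exp; apply: ln_le => //.
  have : 0 < / (INR J + 3/2) by apply: Rinv_0_lt_compat; lra.
  lra.
lra.
Qed.

Lemma nat_above r : exists n : nat, r < INR n.
Proof.
have [H1 _] := archimed (Rabs r).
exists (Z.to_nat (up (Rabs r))).
rewrite INR_IZR_INZ Z2Nat.id.
- have := Rle_abs r; lra.
- apply: le_IZR; have := Rabs_pos r; lra.
Qed.

Lemma G_unbounded M : exists J, M < G J.
Proof.
have [n Hn] := nat_above (exp (M + ln (3/2))).
exists n.
have := G_ln n.
have : M + ln (3/2) < ln (INR n + 3/2).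
  rewrite -[X in X < _]ln_exp; apply: ln_increasing; first by apply: exp_pos.
  have := pos_INR n; lra.
lra.
Qed.

Lemma rsum_distr m n c (F : nat -> R) :
  \big[Rplus/0]_(m <= i < n) (c * F i) = c * \big[Rplus/0]_(m <= i < n) F i.
Proof. by rewrite big_distrr. Qed.

Lemma rsum_split m n (F1 F2 : nat -> R) :
  \big[Rplus/0]_(m <= i < n) (F1 i + F2 i) =
  \big[Rplus/0]_(m <= i < n) F1 i + \big[Rplus/0]_(m <= i < n) F2 i.
Proof. by rewrite big_split. Qed.

Lemma rsum_le m n (F1 F2 : nat -> R) : (forall i, (m <= i < n)%N -> F1 i <= F2 i) ->
  \big[Rplus/0]_(m <= i < n) F1 i <= \big[Rplus/0]_(m <= i < n) F2 i.
Proof.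
move=> H; rewrite big_nat_cond [X in _ <= X]big_nat_cond.
apply: (big_ind2 (fun x y => x <= y)); [lra | move=> *; lra |].
move=> i /andP [Hi _]; exact: H.
Qed.

Lemma rsum_const m n c : (m <= n)%N -> \big[Rplus/0]_(m <= i < n) c = INR (n - m) * c.
Proof.
elim: n => [|n IH] H.
- have -> : m = 0%N by lia. rewrite big_geq //=; ring.
- case: (leqP m n) => Hm.
  + rewrite rsum_recr // IH //.
    have -> : (n.+1 - m = (n - m).+1)%N by lia.
    rewrite S_INR; ring.
  + have -> : m = n.+1 by lia.
    rewrite big_geq // subnn /=; ring.
Qed.

Lemma Fr_th_sq N t : (0 < N)%N ->
  Fr N (th N 0 + INR t * PI / INR N) ^ 2 = / sin (PI * (INR t + /2) / INR N) ^ 2.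
Proof.
move=> HN; have HN' := INR_pos N HN.
rewrite /Fr.
have -> : INR N * (th N 0 + INR t * PI / INR N) = PI / 2 + INR t * PI by rewrite /th; field; lra.
have -> : th N 0 + INR t * PI / INR N = PI * (INR t + /2) / INR N by rewrite /th; field; lra.
rewrite sin_nPI sin_PI2.
have Hs : sin (PI * (INR t + / 2) / INR N) <> 0.
  have := sin_th_nz N (Z.of_nat t) HN; rewrite -INR_IZR_INZ //.
have E : (-1) ^ t * (-1) ^ t = 1.
  by rewrite -pow_add; replace (t + t)%coq_nat with (2 * t)%coq_nat by lia; apply: pow_1_even.
have -> : ((-1) ^ t * 1 / sin (PI * (INR t + / 2) / INR N)) ^ 2 =
   ((-1) ^ t * (-1) ^ t) * (1 / sin (PI * (INR t + / 2) / INR N)) ^ 2 by field.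
rewrite E; field; exact Hs.
Qed.

Lemma CN_bound N : (0 < N)%N -> CN N <= 90 * INR N ^ 2 / PI ^ 2.
Proof.
move=> HN; have HN' := INR_pos N HN.
have Hpi := PI_RGT_0.
rewrite /CN /Scyc.
rewrite (eq_bigr (fun t => / sin (PI * (INR t + /2) / INR N) ^ 2)); last first.
  by move=> t _; rewrite Fr_th_sq.
apply: Rle_trans.
  apply: (rsum_le _ _ _ (fun t => 9 * INR N ^ 2 / PI ^ 2 * (/ (INR t + /2) ^ 2 +
                                   / (INR N - INR t - /2) ^ 2))).
  move=> t /andP [_ Ht].
  have Ht' : INR t + 1 <= INR N by rewrite -S_INR; apply: le_INR; apply/leP.
  have Ht0 := pos_INR t.
  have H1 : 0 < PI * (INR t + / 2) / INR N.
    apply: Rdiv_lt_0_compat => //; nra.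
  have H2 : PI * (INR t + / 2) / INR N < PI.
    apply/Rlt_div_l => //; nra.
  apply: Rle_trans; first exact: (inv_sin2_le _ H1 H2).
  have -> : 9 / (PI * (INR t + / 2) / INR N) ^ 2 = 9 * INR N ^ 2 / PI ^ 2 * / (INR t + /2) ^ 2.
    field; lra.
  have -> : PI - PI * (INR t + / 2) / INR N = PI * (INR N - INR t - /2) / INR N.
    field; lra.
  have -> : 9 / (PI * (INR N - INR t - / 2) / INR N) ^ 2 =
            9 * INR N ^ 2 / PI ^ 2 * / (INR N - INR t - /2) ^ 2.
    field; repeat split; lra.
  apply: Req_le; ring.
rewrite rsum_distr rsum_split.
have Hs1 := sum_half_sq N.
have Hs2 : \big[Rplus/0]_(0 <= t < N) / (INR N - INR t - / 2) ^ 2 <= 5.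
  rewrite big_nat_rev.
  rewrite (eq_big_nat _ _ (F2 := fun t => / (INR t + /2) ^ 2)) //.
  move=> t /andP [_ Ht].
  rewrite add0n minus_INR; last by apply/leP; lia.
  rewrite S_INR; have -> : INR N - (INR N - (INR t + 1)) - /2 = INR t + /2 by lra. done.
have Hc : 0 <= 9 * INR N ^ 2 / PI ^ 2.
  apply: Rmult_le_pos; first nra.
  apply: Rlt_le; apply: Rinv_0_lt_compat; nra.
have -> : 90 * INR N ^ 2 / PI ^ 2 = 9 * INR N ^ 2 / PI ^ 2 * 10 by field; lra.
apply: Rmult_le_compat_l => //; lra.
Qed.

Definition wa (b : nat) (i : nat) : R :=
  if Nat.eqb (blk i) b then (-1) ^ (i - sq b) / sqrt (INR (2 * b + 1)) else 0.

Definition W (b j : nat) : R :=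
  \big[Rplus/0]_(0 <= k < j) (wa b (k + sq b)%N * ub (k + sq b)%N (j + sq b)%N).

Lemma sq_succ b : sq b.+1 = (sq b + (2 * b + 1))%N.
Proof. rewrite /sq; nia. Qed.

Lemma in_block b k : (k < 2 * b + 1)%N -> (sq b <= k + sq b < sq b.+1)%N.
Proof. rewrite sq_succ; move=> H; apply/andP; split; lia. Qed.

Lemma pm1_sq t : (-1) ^ t * (-1) ^ t = 1.
Proof. by rewrite -pow_add; replace (t + t)%coq_nat with (2 * t)%coq_nat by lia; apply: pow_1_even. Qed.

Lemma W_term b j k : (k < j)%N -> (j < 2 * b + 1)%N ->
  wa b (k + sq b)%N * ub (k + sq b)%N (j + sq b)%N =
  (-1) ^ j / (sqrt (INR (2 * b + 1)) * sqrt (CN (2 * b + 1))) *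
  / sin (th (2 * b + 1) (INR (j - k))).
Proof.
move=> Hkj Hj.
set N := (2 * b + 1)%N.
have Hk : (k < N)%N by rewrite /N; lia.
rewrite /wa (blk_in _ _ (in_block _ _ Hk)) Nat.eqb_refl.
rewrite (ub_in _ _ _ (in_block _ _ Hk) (in_block _ _ Hj)) -/N.
have -> : (k + sq b - sq b = k)%N by lia.
have -> : INR (j + sq b) - INR (k + sq b) = INR (j - k) by rewrite !plus_INR minus_INR; [ring| apply/leP; lia].
rewrite /q /Fr.
have HN : (0 < N)%N by rewrite /N; lia.
have HN' := INR_pos N HN.
have -> : INR N * th N (INR (j - k)) = PI / 2 + INR (j - k) * PI by rewrite /th; field; lra.
rewrite sin_nPI sin_PI2.
have -> : (-1) ^ j = (-1) ^ k * (-1) ^ (j - k).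
  rewrite -pow_add; f_equal; lia.
rewrite /Rdiv !Rinv_mult; ring.
Qed.

Lemma W_sq_ge b j : (j < 2 * b + 1)%N ->
  G j ^ 2 / (90 * INR (2 * b + 1)) <= W b j ^ 2.
Proof.
move=> Hj.
set N := (2 * b + 1)%N.
have HN : (0 < N)%N by rewrite /N; lia.
have HN' := INR_pos N HN.
have HC := CN_pos N HN.
have HCb := CN_bound N HN.
have Hpi := PI_RGT_0.
set S := \big[Rplus/0]_(0 <= k < j) / sin (th N (INR (j - k))).
have EW : W b j = (-1) ^ j / (sqrt (INR N) * sqrt (CN N)) * S.
  rewrite /W /S -rsum_distr; apply: eq_big_nat => k /andP [_ Hk].
  by rewrite W_term.
have HS : INR N / PI * G j <= S.
  rewrite /G -rsum_distr /S [X in _ <= X]big_nat_rev.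
  apply: rsum_le => k /andP [_ Hk].
  rewrite add0n.
  have Ed : INR (j - (j - k.+1)) = INR k + 1.
    rewrite minus_INR; last by apply/leP; lia.
    rewrite minus_INR; last by apply/leP; lia.
    rewrite S_INR; ring.
  rewrite Ed.
  have Hk0 := pos_INR k.
  have Hjk : INR k + 2 <= INR N.
    have -> : INR k + 2 = INR k.+2 by rewrite !S_INR; ring.
    apply: le_INR; apply/leP; rewrite /N; lia.
  have Hth0 : 0 < th N (INR k + 1) by rewrite /th; apply: Rdiv_lt_0_compat => //; nra.
  have Hth1 : th N (INR k + 1) < PI by rewrite /th; apply/Rlt_div_l => //; nra.
  have Hsin := sin_gt_0 _ Hth0 Hth1.
  have Hlt := sin_lt_x _ Hth0.
  apply: Rle_trans; last first.
    apply: Rinv_le_contravar; [exact Hsin| apply: Rlt_le; exact Hlt].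
  apply: Req_le; rewrite /th; field; lra.
have HG := G_ge0 j.
have HA : 0 <= INR N / PI * G j by apply: Rmult_le_pos => //; apply: Rlt_le; apply: Rdiv_lt_0_compat.
have HS2 : (INR N / PI * G j) ^ 2 <= S ^ 2 by nra.
have EW2 : W b j ^ 2 = S ^ 2 / (INR N * CN N).
  rewrite EW.
  have Hs1 := sqrt_sqrt (INR N) (Rlt_le _ _ HN').
  have Hs2 := sqrt_sqrt (CN N) (Rlt_le _ _ HC).
  have Hq1 : sqrt (INR N) <> 0 by apply: Rgt_not_eq; apply: sqrt_lt_R0.
  have Hq2 : sqrt (CN N) <> 0 by apply: Rgt_not_eq; apply: sqrt_lt_R0.
  have := pm1_sq j => Hpm.
  have -> : ((-1) ^ j / (sqrt (INR N) * sqrt (CN N)) * S) ^ 2 =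
            ((-1) ^ j * (-1) ^ j) * S ^ 2 / ((sqrt (INR N) * sqrt (INR N)) * (sqrt (CN N) * sqrt (CN N))).
    field; split; assumption.
  by rewrite Hpm Hs1 Hs2 Rmult_1_l.
rewrite EW2.
have HNC : 0 < INR N * CN N by nra.
apply: (Rle_trans _ ((INR N / PI * G j) ^ 2 / (INR N * CN N))); last first.
  apply: Rmult_le_compat_r => //; apply: Rlt_le; apply: Rinv_0_lt_compat => //.
have -> : (INR N / PI * G j) ^ 2 / (INR N * CN N) = (INR N / PI ^ 2 * G j ^ 2) / CN N.
  field; lra.
apply: (Rle_trans _ ((INR N / PI ^ 2 * G j ^ 2) / (90 * INR N ^ 2 / PI ^ 2))).
- apply: Req_le; field; lra.
- apply: Rmult_le_compat_l.
  + apply: Rmult_le_pos; last nra.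
    apply: Rlt_le; apply: Rdiv_lt_0_compat => //; nra.
  + apply: Rinv_le_contravar => //.
Qed.

Lemma rsum_cat m n p (F : nat -> R) : (m <= n)%N -> (n <= p)%N ->
  \big[Rplus/0]_(m <= i < p) F i = \big[Rplus/0]_(m <= i < n) F i + \big[Rplus/0]_(n <= i < p) F i.
Proof. move=> H1 H2; by rewrite (big_cat_nat H1 H2). Qed.

Lemma W_total b : G b ^ 2 / 180 <= \big[Rplus/0]_(0 <= j < 2 * b + 1) W b j ^ 2.
Proof.
set N := (2 * b + 1)%N.
have HN : (0 < N)%N by rewrite /N; lia.
have HN' := INR_pos N HN.
rewrite (rsum_cat _ b); [| lia | rewrite /N; lia].
have H0 := rsum_ge0 0 b (fun j => W b j ^ 2) (fun j => sq_nonneg _).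
apply: (Rle_trans _ (\big[Rplus/0]_(b <= j < N) (G b ^ 2 / (90 * INR N)))); last first.
  have : \big[Rplus/0]_(b <= j < N) (G b ^ 2 / (90 * INR N)) <= \big[Rplus/0]_(b <= j < N) W b j ^ 2.
    apply: rsum_le => j /andP [Hbj HjN].
    apply: Rle_trans; last by apply: W_sq_ge.
    rewrite -/N; apply: Rmult_le_compat_r.
    * apply: Rlt_le; apply: Rinv_0_lt_compat; lra.
    * have := G_mono j b Hbj; have := G_ge0 b; nra.
  move=> H; lra.
rewrite rsum_const; last by rewrite /N; lia.
have -> : (N - b = b.+1)%N by rewrite /N; lia.
rewrite S_INR.
have Eb : INR N = 2 * INR b + 1 by rewrite /N plus_INR mult_INR /=; ring.
rewrite Eb.
have Hb := pos_INR b.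
have HG := G_ge0 b.
have -> : (INR b + 1) * (G b ^ 2 / (90 * (2 * INR b + 1))) =
          G b ^ 2 / 180 * ((2 * INR b + 2) / (2 * INR b + 1)) by field; lra.
rewrite -[X in X <= _]Rmult_1_r.
apply: Rmult_le_compat_l; first nra.
apply/Rle_div_r; lra.
Qed.

Lemma rsum_recl n (F : nat -> R) :
  \big[Rplus/0]_(0 <= i < n.+1) F i = F 0%N + \big[Rplus/0]_(0 <= i < n) F i.+1.
Proof. by rewrite big_nat_recl. Qed.

Lemma sup_abs_ge0 f m j : 0 <= sup_abs f m j.
Proof.
elim: m => [|m IH] /=; first lra.
apply: Rle_trans; [exact IH | apply: Rmax_l].
Qed.

Lemma sup_abs_ge f m n j : (1 <= n <= m)%N -> Rabs (f n j) <= sup_abs f m j.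
Proof.
elim: m => [|m IH] H /=; first lia.
case: (ltnP n m.+1) => Hn.
- apply: Rle_trans; [apply: IH; lia | apply: Rmax_l].
- have -> : n = m.+1 by lia. apply: Rmax_r.
Qed.

Lemma sup_abs_zero f m j : (forall n, f n j = 0) -> sup_abs f m j = 0.
Proof.
move=> H; elim: m => [|m IH] //=.
rewrite IH H Rabs_R0; apply: Rmax_left; lra.
Qed.

Lemma lin_comb_sum u a n j : lin_comb u a n j = \big[Rplus/0]_(0 <= i < n) (a i * u i j).
Proof.
elim: n => [|n IH] /=; first by rewrite big_geq.
by rewrite rsum_recr // IH.
Qed.

Lemma list_comb_seq u a s t j :
  list_comb u a (List.seq s t) j = \big[Rplus/0]_(0 <= k < t) (a (k + s)%N * u (k + s)%N j).
Proof.
elim: t s => [|t IH] s; first by rewrite /list_comb /= big_geq.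
rewrite rsum_recl /=.
rewrite IH; f_equal.
apply: eq_bigr => k _; by rewrite addSnnS.
Qed.

Lemma wa_out b i : blk i <> b -> wa b i = 0.
Proof. move=> H; rewrite /wa; case: (Nat.eqb_spec (blk i) b) => //. Qed.

Lemma wa_lt b i : (i < sq b)%N -> wa b i = 0.
Proof.
move=> H; apply: wa_out => E; have := blk_spec i; rewrite E; lia.
Qed.

Lemma wa_ge b i : (sq b.+1 <= i)%N -> wa b i = 0.
Proof.
move=> H; apply: wa_out => E; have := blk_ge _ _ H; rewrite E; lia.
Qed.

Lemma wa_in b t : (t < 2 * b + 1)%N -> wa b (t + sq b)%N = (-1) ^ t / sqrt (INR (2 * b + 1)).
Proof.
move=> Ht; rewrite /wa (blk_in _ _ (in_block _ _ Ht)) Nat.eqb_refl.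
by have -> : (t + sq b - sq b = t)%N by lia.
Qed.

Lemma wa_abs b t : (t < 2 * b + 1)%N -> Rabs (wa b (t + sq b)%N) = / sqrt (INR (2 * b + 1)).
Proof.
move=> Ht; rewrite wa_in // /Rdiv Rabs_mult pow_1_abs Rmult_1_l Rabs_inv Rabs_right //.
apply: Rle_ge; apply: sqrt_pos.
Qed.

Lemma lin_comb_W b t : lin_comb ub (wa b) (t + sq b)%N (t + sq b)%N = W b t.
Proof.
rewrite lin_comb_sum (rsum_cat _ (sq b)); [|lia|lia].
rewrite big_nat_cond big1; last by move=> i /andP [/andP [_ Hi] _]; rewrite wa_lt // Rmult_0_l.
rewrite Rplus_0_l -{1}(add0n (sq b)) big_addn.
by have -> : (t + sq b - sq b = t)%N by lia.
Qed.

Lemma list_comb_W b t : list_comb ub (wa b) (List.seq (sq b) t) (t + sq b)%N = W b t.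
Proof. by rewrite list_comb_seq. Qed.

Lemma supp_zero b (a : nat -> R) j : (forall i, blk i <> b -> a i = 0) -> (sq b.+1 <= j)%N ->
  forall i, a i * ub i j = 0.
Proof.
move=> Ha Hj i.
case: (Nat.eqb_spec (blk i) b) => E.
- rewrite /ub; have -> : Nat.eqb (blk i) (blk j) = false.
    apply/Nat.eqb_neq => E'; have := blk_ge _ _ Hj; lia.
  ring.
- by rewrite Ha // Rmult_0_l.
Qed.

Lemma lin_comb_zero u a n j : (forall i, a i * u i j = 0) -> lin_comb u a n j = 0.
Proof. move=> H; elim: n => [|n IH] //=; rewrite IH H; ring. Qed.

Lemma list_comb_zero u a l j : (forall i, a i * u i j = 0) -> list_comb u a l j = 0.
Proof.
move=> H; elim: l => [|i l IH] //.
have -> : list_comb u a (i :: l) j = a i * u i j + list_comb u a l j by [].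
rewrite IH H; ring.
Qed.

Lemma norm_lower (V : vec) b : (forall j, (sq b.+1 <= j)%N -> V j = 0) ->
  (forall t, (t < 2 * b + 1)%N -> W b t ^ 2 <= V (t + sq b)%N ^ 2) ->
  sqrt (G b ^ 2 / 180) <= l2norm V.
Proof.
move=> Hz Hw.
rewrite /l2norm; apply: sqrt_le_1_alt.
have Hs : is_series (fun k => V k ^ 2) (psum (fun k => V k ^ 2) (sq b.+1)).
  apply: series_fin => j Hj; rewrite Hz //; ring.
rewrite (is_series_unique _ _ Hs) /psum (rsum_cat _ (sq b)); [| lia | apply: sq_mono; lia].
have H0 := rsum_ge0 0 (sq b) (fun k => V k ^ 2) (fun k => sq_nonneg _).
apply: Rle_trans; last first.
  have H1 : \big[Rplus/0]_(sq b <= i < sq b.+1) V i ^ 2 <=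
            \big[Rplus/0]_(0 <= i < sq b) V i ^ 2 + \big[Rplus/0]_(sq b <= i < sq b.+1) V i ^ 2 by lra.
  exact H1.
rewrite shift_block; apply: Rle_trans; first exact: W_total.
apply: rsum_le => t /andP [_ Ht]; exact: Hw.
Qed.

Lemma norm_x b : l2norm (lin_comb ub (wa b) (sq b.+1)) = 1.
Proof.
rewrite (isometric_of_block _ block_ok_ub) /l2norm.
rewrite (Series_ext _ (fun k => trunc (wa b) (sq b.+1) k ^ 2)); last first.
  by move=> k; rewrite lin_comb_canon.
rewrite (is_series_unique _ _ (trunc_series _ _)) -sqrt_1; f_equal.
rewrite (psum_ext _ (fun i => wa b i ^ 2)); last first.
  by move=> j Hj; rewrite /trunc; case: (Nat.ltb_spec j (sq b.+1)) => //; lia.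
rewrite /psum (rsum_cat _ (sq b)); [| lia | apply: sq_mono; lia].
rewrite big_nat_cond big1; last by move=> i /andP [/andP [_ Hi] _]; rewrite wa_lt //; ring.
rewrite Rplus_0_l shift_block.
have HN := INR_pos (2 * b + 1) ltac:(lia).
rewrite (eq_big_nat _ _ (F2 := fun _ => / INR (2 * b + 1))); last first.
  move=> t /andP [_ Ht]; rewrite wa_in //.
  have Hs := sqrt_sqrt (INR (2 * b + 1)) (Rlt_le _ _ HN).
  have Hq : sqrt (INR (2 * b + 1)) <> 0 by apply: Rgt_not_eq; apply: sqrt_lt_R0.
  have E := pm1_sq t.
  have -> : ((-1) ^ t / sqrt (INR (2 * b + 1))) ^ 2 =
            ((-1) ^ t * (-1) ^ t) / (sqrt (INR (2 * b + 1)) * sqrt (INR (2 * b + 1))) by field.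
  rewrite E Hs; field; lra.
rewrite rsum_const // subn0; field; lra.
Qed.

Lemma big_vs_M (M g : R) : 0 <= M -> 14 * M < g -> M < sqrt (g ^ 2 / 180).
Proof.
move=> HM Hg.
rewrite -[X in X < _](sqrt_pow2 M HM).
apply: sqrt_lt_1_alt; split; first nra.
nra.
Qed.

Theorem main_ub :
  is_basis ub /\ isometric_to_canon ub /\ ~ bibasic ub /\ ~ uniformly_quasi_greedy ub.
Proof.
split; first exact: (basis_of_block _ block_ok_ub).
split; first exact: (isometric_of_block _ block_ok_ub).
split.
- move=> [M [HM H]].
  have [b Hb] := G_unbounded (14 * M).
  have := H (sq b.+1) (wa b).
  rewrite norm_x Rmult_1_r => Hle.
  have Hlow : sqrt (G b ^ 2 / 180) <= l2norm (sup_abs (lin_comb ub (wa b)) (sq b.+1)).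
    apply: norm_lower.
    + move=> j Hj; apply: sup_abs_zero => n; apply: lin_comb_zero.
      apply: (supp_zero b) => // i Hi; exact: wa_out.
    + move=> t Ht.
      case: (posnP t) => [->|Ht0].
      * rewrite /W big_geq //; have := sup_abs_ge0 (lin_comb ub (wa b)) (sq b.+1) (0 + sq b)%N; nra.
      * have Habs := sup_abs_ge (lin_comb ub (wa b)) (sq b.+1) (t + sq b)%N (t + sq b)%N
          ltac:(apply/andP; split; [lia | rewrite sq_succ; lia]).
        rewrite lin_comb_W in Habs.
        have := Rabs_pos (W b t).
        have E : W b t ^ 2 = Rabs (W b t) ^ 2 by rewrite pow2_abs.
        rewrite E; nra.
  have := big_vs_M M (G b) ltac:(lra) Hb; lra.
- move=> [K H].
  set K' := Rabs K + 1.
  have [b Hb] := G_unbounded (14 * K').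
  set N := (2 * b + 1)%N.
  set x := lin_comb ub (wa b) (sq b.+1).
  have Hx2 : in_l2 x.
    exists (psum (fun k => x k ^ 2) (sq b.+1)); apply: series_fin => j Hj.
    rewrite /x lin_comb_zero; first ring.
    apply: (supp_zero b) => // i Hi; exact: wa_out.
  have Hexp : expands ub (wa b) x.
    rewrite /expands.
    apply: (is_lim_seq_ext_loc (fun _ => 0)); last exact: is_lim_seq_const.
    exists (sq b.+1) => n Hn.
    have E : forall j, vsub (lin_comb ub (wa b) n) x j = 0.
      move=> j; rewrite /vsub /x.
      suff : forall p, (sq b.+1 <= p)%N -> lin_comb ub (wa b) p j = lin_comb ub (wa b) (sq b.+1) j.
        move=> Hp; rewrite Hp; [ring | apply/leP; exact Hn].
      elim => [|p IH] Hp; first by have -> : sq b.+1 = 0%N by lia.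
      case: (leqP (sq b.+1) p) => Hp'.
      * have -> : lin_comb ub (wa b) p.+1 j = lin_comb ub (wa b) p j + wa b p * ub p j by [].
        rewrite IH // wa_ge //; ring.
      * by have -> : p.+1 = sq b.+1 by lia.
    rewrite /l2norm (Series_ext _ (fun _ => 0)); last by move=> j; rewrite E; ring.
    have Hz : is_series (fun _ : nat => 0) (psum (fun _ => 0) 0) by apply: series_fin.
    by rewrite (is_series_unique _ _ Hz) psum0 sqrt_0.
  have Hg : forall n : nat, (1 <= n)%coq_nat /\ (n <= N)%coq_nat -> greedy_set (wa b) n (List.seq (sq b) n).
    move=> n Hn; split; [apply: seq_NoDup | split; first by rewrite length_seq].
    move=> i j Hi Hj.
    move: Hi Hj; rewrite !in_seq => Hi Hj.
    have Hi' : (i - sq b < N)%N by rewrite /N; lia.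
    have Ei : i = ((i - sq b) + sq b)%N by lia.
    rewrite [in Rabs (wa b i)]Ei wa_abs //.
    case: (ltnP j (sq b)) => Hj1.
    + left; rewrite wa_lt // Rabs_R0; apply: Rinv_0_lt_compat; apply: sqrt_lt_R0.
      apply: INR_pos; lia.
    + case: (ltnP j (sq b.+1)) => Hj2.
      * right; split; last lia.
        have Ej : j = ((j - sq b) + sq b)%N by lia.
        rewrite Ej wa_abs //; rewrite /N; move: Hj2; rewrite sq_succ; lia.
      * left; rewrite wa_ge // Rabs_R0; apply: Rinv_0_lt_compat; apply: sqrt_lt_R0.
        apply: INR_pos; lia.
  have Hle := H N x (wa b) (fun n => List.seq (sq b) n) Hx2 Hexp (norm_x b) Hg.
  have Hlow : sqrt (G b ^ 2 / 180) <=
              l2norm (sup_abs (fun n => list_comb ub (wa b) (List.seq (sq b) n)) N).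
    apply: norm_lower.
    + move=> j Hj; apply: sup_abs_zero => n; apply: list_comb_zero.
      apply: (supp_zero b) => // i Hi; exact: wa_out.
    + move=> t Ht.
      case: (posnP t) => [->|Ht0].
      * rewrite /W big_geq //.
        have := sup_abs_ge0 (fun n => list_comb ub (wa b) (List.seq (sq b) n)) N (0 + sq b)%N; nra.
      * have Habs := sup_abs_ge (fun n => list_comb ub (wa b) (List.seq (sq b) n)) N t (t + sq b)%N
          ltac:(apply/andP; split; rewrite /N; lia).
        rewrite /= list_comb_W in Habs.
        have := Rabs_pos (W b t).
        have E : W b t ^ 2 = Rabs (W b t) ^ 2 by rewrite pow2_abs.
        rewrite E; nra.
  have := big_vs_M K' (G b) ltac:(have := Rabs_pos K; rewrite /K'; lra) Hb.
  have := Rle_abs K; rewrite /K'; lra.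
Qed.

Theorem proposition4p3 :
  exists u : nat -> vec,
    is_basis u /\ isometric_to_canon u /\
    ~ bibasic u /\ ~ uniformly_quasi_greedy u.
Proof.
  exists ub; exact main_ub.
Qed.
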